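(* Let $q$ be a power of an odd prime $p$, let $G$ be one of $\mathrm{SL}_2(q)$, $\mathrm{GL}_2(q)$, $\mathrm{PSL}_2(q)$, $\mathrm{PGL}_2(q)$, and let $\mathcal{C}$ be a conjugacy class of non-trivial unipotent elements in $G$. Then $K_{\mathcal{C}}$ is irreducible.
   Context: For a finite group $G$ and a subset $\mathcal{C}\subseteq G\setminus\{1\}$ closed under conjugation, the Killing form $K_{\mathcal{C}}$ is the bilinear form on the complex vector space with basis $\mathcal{C}$ given on basis elements by $K_{\mathcal{C}}(a,b)=|C_G(ab)\cap\mathcal{C}|$. $K_{\mathcal{C}}$ is irreducible if the graph with vertex set $\mathcal{C}$, in which distinct $a,b$ are adjacent iff $C_G(ab)\cap\mathcal{C}\neq\emptyset$, is connected, and reducible otherwise. *)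

(* Defs.v *)
From HB Require Import structures.
From mathcomp Require Import all_boot all_order all_algebra all_fingroup all_solvable all_field.
Set Implicit Arguments. Unset Strict Implicit. Unset Printing Implicit Defensive.
Import GRing.Theory.
Local Open Scope group_scope.

Definition killing_adj (gT : finGroupType) (G C : {set gT}) : rel gT :=
  fun a b => [&& a \in C, b \in C, a != b & C :&: 'C_G[a * b] != set0].

(* K_C is irreducible iff this graph (vertex set C) is connected. *)
Definition killing_irreducible (gT : finGroupType) (G C : {set gT}) : Prop :=
  forall a b, a \in C -> b \in C -> connect (killing_adj G C) a b.

Definition unipotent (F : finFieldType) (g : {'GL_2[F]}) : Prop :=
  exists k : nat, ((GLval g - 1) ^+ k = 0)%R.

Definition SL2 (F : finFieldType) : {set {'GL_2[F]}} :=
  [set g : {'GL_2[F]} | (\det (GLval g) == 1)%R].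

Lemma SL2_group_set (F : finFieldType) : group_set (SL2 F).
Proof.
apply/group_setP; split; first by rewrite inE GL_1E det1.
move=> x y; rewrite !inE GL_ME det_mulmx => /eqP -> /eqP ->.
by rewrite mulr1.
Qed.

Canonical SL2_group (F : finFieldType) := Group (SL2_group_set F).

Definition PGL2 (F : finFieldType) := ('GL_2[F] / 'Z('GL_2[F]))%G.
Definition PSL2 (F : finFieldType) := (SL2_group F / 'Z(SL2_group F))%G.

(* Main.v *)
Require Import Defs.
From HB Require Import structures.
From mathcomp Require Import all_boot all_order all_algebra all_fingroup all_solvable all_field.
From mathcomp Require Import ring.

Module MxPart.
Set Implicit Arguments. Unset Strict Implicit. Unset Printing Implicit Defensive.
Import GRing.Theory.
Local Open Scope ring_scope.

Section Mx2.
Variable F : fieldType.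
Definition mx2 (a b c d : F) : 'M[F]_2 :=
  \matrix_(i < 2, j < 2)
    if val i == 0%N then (if val j == 0%N then a else b)
    else (if val j == 0%N then c else d).

Lemma mx2_eta (A : 'M[F]_2) : A = mx2 (A 0 0) (A 0 1) (A 1 0) (A 1 1).
Proof.
apply/matrixP=> i j; rewrite mxE.
case: i => [[|[|i]] Hi] //; case: j => [[|[|j]] Hj] //=;
by congr (A _ _); apply: val_inj.
Qed.

Lemma mx2E00 a b c d : mx2 a b c d 0 0 = a. Proof. by rewrite mxE. Qed.
Lemma mx2E01 a b c d : mx2 a b c d 0 1 = b. Proof. by rewrite mxE. Qed.
Lemma mx2E10 a b c d : mx2 a b c d 1 0 = c. Proof. by rewrite mxE. Qed.
Lemma mx2E11 a b c d : mx2 a b c d 1 1 = d. Proof. by rewrite mxE. Qed.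

Lemma mul_mx2 a b c d e f g h :
  mx2 a b c d *m mx2 e f g h = mx2 (a*e+b*g) (a*f+b*h) (c*e+d*g) (c*f+d*h).
Proof.
apply/matrixP=> i j; rewrite !mxE !big_ord_recl big_ord0 !mxE /=.
by case: i => [[|[|i]] Hi] //; case: j => [[|[|j]] Hj] //=; rewrite addr0.
Qed.

Lemma mx2_1 : (1%:M : 'M[F]_2) = mx2 1 0 0 1.
Proof.
by apply/matrixP=> i j; rewrite !mxE; case: i => [[|[|i]] Hi] //; case: j => [[|[|j]] Hj].
Qed.

Lemma add_mx2 a b c d e f g h :
  mx2 a b c d + mx2 e f g h = mx2 (a+e) (b+f) (c+g) (d+h).
Proof.
by apply/matrixP=> i j; rewrite !mxE; case: i => [[|[|i]] Hi] //; case: j => [[|[|j]] Hj].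
Qed.

Lemma opp_mx2 a b c d : - mx2 a b c d = mx2 (-a) (-b) (-c) (-d).
Proof.
by apply/matrixP=> i j; rewrite !mxE; case: i => [[|[|i]] Hi] //; case: j => [[|[|j]] Hj].
Qed.

Lemma det_mx2 a b c d : \det (mx2 a b c d) = a * d - b * c.
Proof.
rewrite (expand_det_row _ 0) !big_ord_recl big_ord0 /cofactor !det_mx11 !mxE /=.
rewrite !expr0 !expr1 /=. 
idtac.
ring.
Qed.

Lemma mx2P a b c d e f g h :
  a = e -> b = f -> c = g -> d = h -> mx2 a b c d = mx2 e f g h.
Proof. by move=> -> -> -> ->. Qed.

Lemma mx2_eq a b c d e f g h :
  mx2 a b c d = mx2 e f g h -> [/\ a = e, b = f, c = g & d = h].
Proof.
move=> E; split.
- by rewrite -(mx2E00 a b c d) E mx2E00.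
- by rewrite -(mx2E01 a b c d) E mx2E01.
- by rewrite -(mx2E10 a b c d) E mx2E10.
- by rewrite -(mx2E11 a b c d) E mx2E11.
Qed.
End Mx2.

End MxPart.
Import MxPart.

Module GenPart.
Set Implicit Arguments. Unset Strict Implicit. Unset Printing Implicit Defensive.
Local Open Scope group_scope.

Section Gen.
Variable gT : finGroupType.
Implicit Types G : {group gT}.

Lemma conj_eq (x y h : gT) : h * y = x * h -> x ^ h = y.
Proof. by move=> E; rewrite conjgE -E mulKg. Qed.

Lemma classJ G x y g : y \in x ^: G -> g \in G -> y ^ g \in x ^: G.
Proof. by move=> yC gG; rewrite -(class_eqP yC) memJ_class. Qed.

Lemma adj_sym G x : x \in G -> symmetric (killing_adj G (x ^: G)).
Proof.
move=> xG.
have sCG := class_subG xG (subxx G).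
suff H a b : killing_adj G (x ^: G) a b -> killing_adj G (x ^: G) b a.
  by move=> a b; apply/idP/idP; apply: H.
case/and4P=> aC bC ab /set0Pn[c /setIP[cC /setIP[cG cab]]].
apply/and4P; split => //; first by rewrite eq_sym.
apply/set0Pn; exists (c ^ a).
have aG := subsetP sCG a aC.
apply/setIP; split; first by rewrite classJ.
apply/setIP; split; first by rewrite groupJ.
have -> : b * a = (a * b) ^ a by rewrite conjgE mulgA mulKg.
by rewrite cent1J memJ_conjg.
Qed.

Lemma adj_conj G x g a b : x \in G -> g \in G ->
  killing_adj G (x ^: G) a b -> killing_adj G (x ^: G) (a ^ g) (b ^ g).
Proof.
move=> xG gG.
have sCG := class_subG xG (subxx G).
case/and4P=> aC bC ab /set0Pn[c /setIP[cC /setIP[cG cab]]].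
have memC y : y \in x ^: G -> y ^ g \in x ^: G by move=> ?; apply: classJ.
apply/and4P; split; rewrite ?memC ?(inj_eq (@conjg_inj _ g)) //.
apply/set0Pn; exists (c ^ g).
apply/setIP; split; first by rewrite memC.
apply/setIP; split; first by rewrite groupJ.
by rewrite -conjMg cent1J memJ_conjg.
Qed.

Lemma connect_conj G x g a b : x \in G -> g \in G ->
  connect (killing_adj G (x ^: G)) a b ->
  connect (killing_adj G (x ^: G)) (a ^ g) (b ^ g).
Proof.
move=> xG gG /connectP[p pth ->]; elim: p a pth => [|y p IH] a /=.
  by move=> _; apply: connect0.
case/andP=> ay py; apply: connect_trans (IH _ py).
by apply: connect1; apply: adj_conj.
Qed.

Lemma connect_comm G x a b : x \in G -> a \in x ^: G -> b \in x ^: G ->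
  commute a b -> connect (killing_adj G (x ^: G)) a b.
Proof.
move=> xG aC bC cab; have [->|nab] := eqVneq a b; first exact: connect0.
apply: connect1; apply/and4P; split => //.
have sCG := class_subG xG (subxx G).
apply/set0Pn; exists a.
apply/setIP; split=> //; apply/setIP; split; first exact: (subsetP sCG).
by apply/(@cent1P gT); rewrite /commute -[RHS]mulgA -cab.
Qed.

Lemma connect_morph (rT : finGroupType) (D : {group gT}) (f : {morphism D >-> rT})
   G x : G \subset D -> x \in G ->
  (forall a b, a \in x ^: G -> b \in x ^: G -> connect (killing_adj G (x ^: G)) a b) ->
  forall a b, a \in f @* (x ^: G) -> b \in f @* (x ^: G) ->
   connect (killing_adj (f @* G) (f @* (x ^: G))) a b.
Proof.
move=> sGD xG H.
have sCG := class_subG xG (subxx G).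
have sCD := subset_trans sCG sGD.
have step u v : killing_adj G (x ^: G) u v ->
    connect (killing_adj (f @* G) (f @* (x ^: G))) (f u) (f v).
  case/and4P=> uC vC uv /set0Pn[c /setIP[cC /setIP[cG cuv]]].
  have [->|nfuv] := eqVneq (f u) (f v); first exact: connect0.
  have uD := subsetP sCD u uC; have vD := subsetP sCD v vC.
  have cD := subsetP sGD c cG.
  apply: connect1; apply/and4P; split; rewrite ?mem_morphim //.
  apply/set0Pn; exists (f c).
  apply/setIP; split; first by rewrite mem_morphim.
  apply/setIP; split; first by rewrite mem_morphim.
  rewrite -morphM //; apply/cent1P; rewrite /commute -!morphM ?groupM //.
  by move/cent1P: cuv => ->.
move=> a b /morphimP[a0 _ a0C ->] /morphimP[b0 _ b0C ->].
move: (H a0 b0 a0C b0C) => /connectP[p pth ->].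
elim: p a0 {a0C} pth => [|y p IH] a0 /=; first by move=> _; apply: connect0.
by case/andP=> ay py; apply: connect_trans (IH _ py); apply: step.
Qed.
End Gen.

End GenPart.
Import GenPart.

Module GLPart.
Set Implicit Arguments. Unset Strict Implicit. Unset Printing Implicit Defensive.
Import GRing.Theory.
Local Open Scope ring_scope.
Section GL2.
Variable F : finFieldType.
Local Notation GLT := {'GL_2[F]}.

Definition GL2 (A : 'M[F]_2) : GLT := insubd (1%g : GLT) A.

Lemma GL2K (A : 'M[F]_2) : \det A != 0 -> GLval (GL2 A) = A.
Proof.
move=> dA; rewrite /GL2 val_insubd.
have -> : (A \is a GRing.unit).
  by rewrite -topredE /=; move: (@unitmxE F 2 A); rewrite unitfE dA.
by [].
Qed.

Lemma GL2_SL (A : 'M[F]_2) : \det A = 1 -> GL2 A \in SL2 F.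
Proof. by move=> dA; rewrite inE GL2K ?dA ?oner_neq0. Qed.

Lemma GL2_SLK (A : 'M[F]_2) : \det A = 1 -> GLval (GL2 A) = A.
Proof. by move=> dA; rewrite GL2K ?dA ?oner_neq0. Qed.

End GL2.

Section Elts.
Variable F : finFieldType.
Local Notation GLT := {'GL_2[F]}.

Lemma GLmul_eq (u v w z : GLT) :
  (GLval u *m GLval v = GLval w *m GLval z)%R -> (u * v = w * z)%g.
Proof. by move=> E; apply: val_inj; exact: E. Qed.

Lemma conjGL (x y h : GLT) : (h * y = x * h)%g -> (x ^ h)%g = y.
Proof. by move=> E; rewrite conjgE -E mulKg. Qed.

Definition Tm (s : F) : GLT := GL2 (mx2 1 s 0 1).
Definition Lm (s : F) : GLT := GL2 (mx2 1 0 s 1).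

Lemma det_T s : \det (mx2 1 s 0 1) = 1 :> F.
Proof. by rewrite det_mx2; ring. Qed.
Lemma det_L s : \det (mx2 1 0 s 1) = 1 :> F.
Proof. by rewrite det_mx2; ring. Qed.

Lemma TmE s : GLval (Tm s) = mx2 1 s 0 1. Proof. exact: GL2_SLK (det_T s). Qed.
Lemma LmE s : GLval (Lm s) = mx2 1 0 s 1. Proof. exact: GL2_SLK (det_L s). Qed.
Lemma Tm_SL s : Tm s \in SL2 F. Proof. exact: GL2_SL (det_T s). Qed.
Lemma Lm_SL s : Lm s \in SL2 F. Proof. exact: GL2_SL (det_L s). Qed.

Lemma Tm_comm s t : commute (Tm s) (Tm t).
Proof. by apply: GLmul_eq; rewrite !TmE !mul_mx2; apply: mx2P; ring. Qed.
Lemma Lm_comm s t : commute (Lm s) (Lm t).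
Proof. by apply: GLmul_eq; rewrite !LmE !mul_mx2; apply: mx2P; ring. Qed.

Variables (s : F).
Hypotheses (hs : s != 0%R) (h2 : (2%:R : F) != 0%R).

Definition m4 : F := - 4%:R / s.
Definition Wm : GLT := GL2 (mx2 0 (- s / 2%:R) (2%:R / s) 0).
Definition Vm : GLT := GL2 (mx2 1 0 (- 2%:R / s) 1).
Definition Cm : GLT := GL2 (mx2 (-1) s (- 4%:R / s) 3%:R).

Lemma det_W : \det (mx2 0 (- s / 2%:R) (2%:R / s) 0) = 1 :> F.
Proof. by rewrite det_mx2; field; rewrite hs h2. Qed.
Lemma det_V : \det (mx2 1 0 (- 2%:R / s) 1) = 1 :> F.
Proof. by rewrite det_mx2; field; rewrite hs. Qed.
Lemma det_C : \det (mx2 (-1) s (- 4%:R / s) 3%:R) = 1 :> F.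
Proof. by rewrite det_mx2; field; rewrite hs. Qed.

Lemma Wm_SL : Wm \in SL2 F. Proof. exact: GL2_SL det_W. Qed.
Lemma Vm_SL : Vm \in SL2 F. Proof. exact: GL2_SL det_V. Qed.

Lemma W_eq : (Wm * Lm m4 = Tm s * Wm)%g.
Proof.
apply: GLmul_eq; rewrite /Wm GL2_SLK ?det_W // LmE TmE /m4 !mul_mx2.
by apply: mx2P; field; rewrite ?hs ?h2.
Qed.

Lemma V_eq : (Vm * Cm = Tm s * Vm)%g.
Proof.
apply: GLmul_eq; rewrite TmE /Vm /Cm !GL2_SLK ?det_V ?det_C // !mul_mx2.
by apply: mx2P; field; rewrite ?hs ?h2.
Qed.

Lemma C_comm : commute Cm (Tm s * Lm m4)%g.
Proof.
apply: GLmul_eq; rewrite !GL_MxE TmE LmE /Cm !GL2_SLK ?det_C // /m4 !mul_mx2.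
by apply: mx2P; field; rewrite ?hs ?h2.
Qed.

Lemma T_neq_L : Tm s != Lm m4.
Proof.
apply/eqP=> /(congr1 GLval); rewrite TmE LmE /m4 => /mx2_eq[_ E _ _].
by move: hs; rewrite E eqxx.
Qed.
End Elts.

Section Unip.
Variable F : finFieldType.
Local Notation GLT := {'GL_2[F]}.

Lemma mx2_one : (1 : 'M[F]_2) = mx2 1 0 0 1.
Proof. exact: mx2_1. Qed.
Lemma mx2_zero : (0 : 'M[F]_2) = mx2 0 0 0 0.
Proof. by apply/matrixP=> i j; rewrite !mxE; case: i => [[|[|i]] Hi] //; case: j => [[|[|j]] Hj]. Qed.

Lemma detX2 (A : 'M[F]_2) k : \det (A ^+ k) = \det A ^+ k.
Proof.
elim: k => [|k IH]; first by rewrite !expr0 det1.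
by rewrite !exprS -mulmxE det_mulmx IH.
Qed.

Lemma scale_mx2 (c a b d e : F) : c *: mx2 a b d e = mx2 (c * a) (c * b) (c * d) (c * e).
Proof. by apply/matrixP=> i j; rewrite !mxE; case: i => [[|[|i]] Hi] //; case: j => [[|[|j]] Hj]. Qed.

Lemma eq_via (x y c D : F) : D = 0 -> x - y = c * D -> x = y.
Proof. by move=> -> ; rewrite mulr0 => /eqP; rewrite subr_eq0 => /eqP. Qed.

Lemma unip_nf (x0 : GLT) : unipotent x0 -> x0 != 1%g ->
  exists g0 s, [/\ g0 \in SL2 F, s != 0 & (g0 * Tm s = x0 * g0)%g].
Proof.
case=> k hk nx0.
set N := (GLval x0 - 1) in hk.
have eN := mx2_eta N.
set n0 := N 0 0 in eN; set n1 := N 0 1 in eN; set n2 := N 1 0 in eN; set n3 := N 1 1 in eN.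
have eA : GLval x0 = mx2 (1 + n0) n1 n2 (1 + n3).
  by rewrite -[GLval x0](subrK 1) -/N eN mx2_one add_mx2 !addr0 ![_ + 1]addrC.
have Nn0 : ~~ [&& n0 == 0, n1 == 0, n2 == 0 & n3 == 0].
  apply: contra nx0 => /and4P[/eqP z0 /eqP z1 /eqP z2 /eqP z3].
  by apply/eqP; apply: val_inj; rewrite /= eA z0 z1 z2 z3 !addr0 mx2_one.
have det0 : n0 * n3 - n1 * n2 = 0.
  have := congr1 determinant hk; rewrite detX2 eN det_mx2 det0.
  by move/eqP; rewrite expf_eq0 => /andP[_ /eqP].
set t := n0 + n3.
have NN : N *m N = t *: N.
  rewrite eN mul_mx2 scale_mx2; apply: mx2P.
  - by apply: (eq_via (c := -1) det0); rewrite /t; ring.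
  - by rewrite /t; ring.
  - by rewrite /t; ring.
  - by apply: (eq_via (c := -1) det0); rewrite /t; ring.
have pw j : N ^+ j.+1 = t ^+ j *: N.
  elim: j => [|j IH]; first by rewrite expr1 expr0 scale1r.
  by rewrite exprSr IH -mulmxE -scalemxAl NN scalerA -exprSr.
have t0 : t = 0.
  case: k hk => [|k] hk.
    by move: hk; rewrite expr0 => /eqP; rewrite oner_eq0.
  move: hk; rewrite pw eN scale_mx2 mx2_zero => /mx2_eq[e0 e1 e2 e3].
  have tk : t ^+ k = 0.
    apply/eqP; apply: contraR Nn0 => tn.
    by apply/and4P; split; apply/eqP; [move: e0|move: e1|move: e2|move: e3];
      move/eqP; rewrite mulf_eq0 (negbTE tn) /= => /eqP.
  by move/eqP: tk; rewrite expf_eq0 => /andP[_ /eqP].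
have e3 : n3 = - n0 by apply/eqP; rewrite -addr_eq0 addrC; apply/eqP; exact: t0.
have dd : n0 * n0 + n1 * n2 = 0.
  by apply: (eq_via (c := -1) det0); rewrite e3; ring.
rewrite e3 in eA.
have [n1z|n1nz] := eqVneq n1 0.
  have n0z : n0 = 0.
    by apply/eqP; rewrite -[n0 == 0]orbb -mulf_eq0; apply/eqP; rewrite -dd n1z mul0r addr0.
  have n2nz : n2 != 0.
    apply: contraNneq Nn0 => n2z; apply/and4P; split; apply/eqP => //.
    by rewrite e3 n0z oppr0.
  have dg : \det (mx2 0 (-1) 1 0 : 'M[F]_2) = 1 by rewrite det_mx2; ring.
  exists (GL2 (mx2 0 (-1) 1 0)), (- n2); split; first exact: GL2_SL.
    by rewrite oppr_eq0.
  apply: GLmul_eq; rewrite TmE GL2_SLK // eA n1z n0z !mul_mx2; apply: mx2P; ring.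
have dg : \det (mx2 n1 0 (- n0) n1^-1 : 'M[F]_2) = 1.
  by rewrite det_mx2; field.
exists (GL2 (mx2 n1 0 (- n0) n1^-1)), n1^-1; split; first exact: GL2_SL.
  by rewrite invr_eq0.
have e2 : n2 = - (n0 * n0) / n1.
  by apply: (eq_via (c := n1^-1) dd); field.
apply: GLmul_eq; rewrite TmE GL2_SLK // eA e2 !mul_mx2; apply: mx2P; by field.
Qed.
End Unip.

End GLPart.
Import GLPart.

Module CorePart.
Set Implicit Arguments. Unset Strict Implicit. Unset Printing Implicit Defensive.
Import GRing.Theory.
Local Open Scope ring_scope.

Section Core.
Variable F : finFieldType.
Local Notation GLT := {'GL_2[F]}.

Lemma det_GL (h : GLT) : (GLval h 0 0 * GLval h 1 1 - GLval h 0 1 * GLval h 1 0 != 0)%R.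
Proof. by have := GL_det h; rewrite {1}(mx2_eta (GLval h)) det_mx2. Qed.

Lemma cu_mx (A : 'M[F]_2) k0 k1 k3 s : A = mx2 k0 k1 0 k3 -> k0 != 0 ->
  A *m mx2 1 (s * k3 / k0) 0 1 = mx2 1 s 0 1 *m A.
Proof. by move=> -> d0; rewrite !mul_mx2; apply: mx2P; field. Qed.

Lemma cl_mx (A : 'M[F]_2) k0 k1 k2 s : A = mx2 k0 k1 k2 0 -> k1 != 0 ->
  A *m mx2 1 0 (s * k2 / k1) 1 = mx2 1 s 0 1 *m A.
Proof. by move=> -> d0; rewrite !mul_mx2; apply: mx2P; field. Qed.

Lemma conj_upper (h : GLT) s : GLval h 1 0 = 0%R -> exists t, (Tm s ^ h)%g = Tm t.
Proof.
move=> z; have dh := det_GL h; rewrite z mulr0 subr0 mulf_eq0 negb_or in dh.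
case/andP: dh => d0 d3.
have eh := mx2_eta (GLval h); rewrite z in eh.
exists (s * GLval h 1 1 / GLval h 0 0)%R; apply: conjGL; apply: GLmul_eq.
rewrite !TmE; exact: cu_mx eh d0.
Qed.

Lemma conj_lower (h : GLT) s : GLval h 1 1 = 0%R -> exists t, (Tm s ^ h)%g = Lm t.
Proof.
move=> z; have dh := det_GL h; rewrite z mulr0 sub0r oppr_eq0 mulf_eq0 negb_or in dh.
case/andP: dh => d1 d2.
have eh := mx2_eta (GLval h); rewrite z in eh.
exists (s * GLval h 1 0 / GLval h 0 1)%R; apply: conjGL; apply: GLmul_eq.
rewrite TmE LmE; exact: cl_mx eh d1.
Qed.

Lemma core (G : {group GLT}) (x0 : GLT) :
  SL2 F \subset G -> (2%:R : F) != 0%R -> x0 \in G -> x0 != 1%g -> unipotent x0 ->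
  forall a b, a \in (x0 ^: G)%g -> b \in (x0 ^: G)%g ->
  connect (killing_adj G (x0 ^: G)%g) a b.
Proof.
move=> sSG h2 x0G nx0 ux0.
have [g0 [s [g0S hs eg0]]] := unip_nf ux0 nx0.
have g0G : g0 \in G := subsetP sSG g0 g0S.
have ex1 : (x0 ^ g0)%g = Tm s by apply: conjGL.
rewrite -(classGidl x0 g0G) ex1.
have x1G : Tm s \in G by rewrite -ex1 groupJ.
set x1 := Tm s.
have C1 : x1 \in (x1 ^: G)%g := class_refl G x1.
suff main h : h \in G -> connect (killing_adj G (x1 ^: G)%g) x1 (x1 ^ h)%g.
  move=> a b /imsetP[ha haG ->] /imsetP[hb hbG ->].
  have := connect_conj x1G haG (main _ (groupM hbG (groupVr haG))).
  by rewrite -conjgM mulgKV.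
move=> hG.
have [z|nz] := eqVneq (GLval h 1 0) 0%R.
  have [t et] := conj_upper s z.
  apply: connect_comm => //; first exact: memJ_class.
  by rewrite et; apply: Tm_comm.
pose r := (- GLval h 1 1 / GLval h 1 0)%R.
pose u := Tm r.
have uG : u \in G := subsetP sSG u (Tm_SL r).
have hu1 : GLval (h * u)%g 1 1 = 0%R.
  rewrite GL_MxE TmE (mx2_eta (GLval h)) mul_mx2 mx2E11 /r; by field.
have [t et] := conj_lower s hu1.
have m1 : connect (killing_adj G (x1 ^: G)%g) x1 (x1 ^ (h * u))%g.
  have mC : Lm (m4 s) \in (x1 ^: G)%g.
    by rewrite -(conjGL (W_eq hs h2)) memJ_class // (subsetP sSG) // Wm_SL.
  apply: (@connect_trans _ _ (Lm (m4 s))).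
    apply: connect1; apply/and4P; split => //; first exact: T_neq_L.
    apply/set0Pn; exists (Cm s).
    have VG : Vm s \in G := subsetP sSG _ (Vm_SL hs).
    apply/setIP; split; first by rewrite -(conjGL (V_eq hs)) memJ_class.
    apply/setIP; split; first by rewrite -(conjGL (V_eq hs)) groupJ.
    by apply/cent1P; apply: C_comm.
  apply: connect_comm => //; first by rewrite memJ_class // groupM.
  by rewrite et; apply: Lm_comm.
have := connect_conj x1G (groupVr uG) m1.
have -> : (x1 ^ u^-1)%g = x1.
  by rewrite conjgE invgK mulgA (Tm_comm r s) mulgK.
by rewrite -conjgM mulgK.
Qed.
End Core.

End CorePart.
Import CorePart.

Module MainPart.
Import GRing.Theory.
Local Open Scope ring_scope.
Local Open Scope group_scope.

Lemma two_neq0 (p k : nat) (F : finFieldType) :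
  prime p -> odd p -> #|F| = (p ^ k)%N -> (2%:R : F) != 0%R.
Proof.
move=> pp op cF; have pc := card_finPcharP cF pp.
apply/negP=> /eqP t0.
have : (2%N \in [pchar F])%R by rewrite inE /= t0 eqxx.
rewrite (pcharf_eq pc) inE => /eqP e.
by move: op; rewrite -e.
Qed.

Lemma gen_case (F : finFieldType) (G : {group {'GL_2[F]}}) (C : {set {'GL_2[F]}}) :
  (2%:R : F) != 0%R -> SL2 F \subset G ->
  C \in classes G -> 1%g \notin C -> {in C, forall g, unipotent g} ->
  killing_irreducible G C.
Proof.
move=> h2 sSG /imsetP[x xG ->] n1 u a b aC bC.
apply: core => //; last exact: u (class_refl G x).
by apply: contraNneq n1 => <-; apply: class_refl.
Qed.

Lemma quo_case (F : finFieldType) (G : {group {'GL_2[F]}})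
   (C : {set coset_of 'Z(G)}) :
  (2%:R : F) != 0%R -> SL2 F \subset G ->
  C \in classes (G / 'Z(G)) -> 1%g \notin C ->
  {in C, forall x, exists2 g, (g \in G) /\ unipotent g & coset 'Z(G) g = x} ->
  killing_irreducible (G / 'Z(G)) C.
Proof.
move=> h2 sSG /imsetP[xb xbG ->] n1 u.
have [g [gG ug] eg] := u xb (class_refl _ xb).
have nZG : G \subset 'N('Z(G)) := normal_norm (center_normal G).
have gN : g \in 'N('Z(G)) := subsetP nZG g gG.
rewrite -eg -quotient_class //.
have ng : g != 1.
  apply: contraNneq n1 => e1; rewrite -eg e1 coset_id ?group1 //.
  exact: class_refl.
move=> a b aC bC.
apply: (connect_morph (f := coset_morphism 'Z(G))) => //.
move=> a0 b0 a0C b0C; exact: core.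
Qed.


End MainPart.
Import MainPart.

Local Open Scope group_scope.

Theorem corollary3p5 (p k : nat) (F : finFieldType) :
  prime p -> odd p -> (0 < k)%N -> #|F| = (p ^ k)%N ->
  (* G = GL_2(q) *)
  (forall C : {set {'GL_2[F]}},
     C \in classes 'GL_2[F] -> 1%g \notin C ->
     {in C, forall g, unipotent g} ->
     killing_irreducible 'GL_2[F] C) /\
  (* G = SL_2(q) *)
  (forall C : {set {'GL_2[F]}},
     C \in classes (SL2 F) -> 1%g \notin C ->
     {in C, forall g, unipotent g} ->
     killing_irreducible (SL2 F) C) /\
  (* G = PGL_2(q) ; unipotent = image of a unipotent element of GL_2(q) *)
  (forall C : {set coset_of 'Z('GL_2[F])},
     C \in classes (PGL2 F) -> 1%g \notin C ->
     {in C, forall x, exists2 g, unipotent g & coset 'Z('GL_2[F]) g = x} ->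
     killing_irreducible (PGL2 F) C) /\
  (* G = PSL_2(q) ; unipotent = image of a unipotent element of SL_2(q) *)
  (forall C : {set coset_of 'Z(SL2_group F)},
     C \in classes (PSL2 F) -> 1%g \notin C ->
     {in C, forall x, exists2 g, (g \in SL2 F) /\ unipotent g &
                                 coset 'Z(SL2_group F) g = x} ->
     killing_irreducible (PSL2 F) C).
Proof.
move=> pp op _ cF; have h2 := @two_neq0 p k F pp op cF.
split; [|split; [|split]].
- by move=> C; apply: (@gen_case F 'GL_2[F]%G C) => //; apply: subsetT.
- by move=> C; apply: (@gen_case F (SL2_group F) C) => //.
- move=> C CG n1 u; apply: (@quo_case F 'GL_2[F]%G C) => //; first exact: subsetT.
  by move=> x /u[g ug eg]; exists g => //; split => //; apply: in_setT.
- by move=> C; apply: (@quo_case F (SL2_group F) C) => //.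
Qed.
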